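(* Let $k \geq 0$ be an integer and let $t$ be an indeterminate. Define polynomials $A^{k,\ell}(t)$ for integers $\ell \geq 0$ by $A^{k,0}(t) = 1$ and, for $\ell \geq 1$, $$A^{k,\ell}(t) = (1-t^{k+\ell})\, A^{k,\ell-1}(t) + t^{\ell(k+1)} \begin{bmatrix} k+\ell \\ \ell \end{bmatrix}_t .$$ Then for every $\ell \geq 0$, $$A^{k,\ell}(t) = 1 + \sum_{i=1}^{\ell} t^{i(k+\ell+1)} \begin{bmatrix} k \\ i \end{bmatrix}_t \sum_{j=0}^{\ell-i} t^{j(k-i+1)} \begin{bmatrix} i+j-1 \\ j \end{bmatrix}_t .$$
   Context: For integers $a,b$, the $t$-binomial coefficient is $\begin{bmatrix} a \\ b \end{bmatrix}_t = \frac{(t;t)_a}{(t;t)_b (t;t)_{a-b}}$ when $0 \le b \le a$ and $0$ otherwise, where $(x;t)_n = (1-x)(1-xt)(1-xt^2)\cdots(1-xt^{n-1})$ and $(x;t)_0=1$. *)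

(* Defs.v *)
(* The indeterminate t is 'X in the field of rational
   functions {fraction {poly int}}; t-binomials are defined literally as
   quotients of t-Pochhammer symbols in that field. *)
From HB Require Import structures.
From mathcomp Require Import all_boot all_order all_algebra fraction.
Set Implicit Arguments. Unset Strict Implicit. Unset Printing Implicit Defensive.
Import Order.TTheory GRing.Theory Num.Theory.
Local Open Scope ring_scope.

Definition ratfun : fieldType := {fraction {poly int}}.

Definition tvar : ratfun := tofrac ('X : {poly int}).

Definition tpoch (x : ratfun) (n : nat) : ratfun :=
  \prod_(i < n) (1 - x * tvar ^+ i).

Definition tbinom (a b : nat) : ratfun :=
  if (b <= a)%N then tpoch tvar a / (tpoch tvar b * tpoch tvar (a - b))
  else 0.

Fixpoint Akl (k l : nat) : ratfun :=
  match l with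
  | 0 => 1
  | l'.+1 => (1 - tvar ^+ (k + l)) * Akl k l'
             + tvar ^+ (l * (k + 1)) * tbinom (k + l) l
  end.

(* Main.v *)
Require Import Defs.
From HB Require Import structures.
From mathcomp Require Import all_boot all_order all_algebra fraction.
From mathcomp Require Import ring zify.
Import GRing.Theory.
Local Open Scope ring_scope.

Definition pp n := tpoch tvar n.

Lemma ppS n : pp n.+1 = pp n * (1 - tvar ^+ n.+1).
Proof. by rewrite /pp /tpoch big_ord_recr /= exprS. Qed.

Lemma pp0 : pp 0 = 1.
Proof. by rewrite /pp /tpoch big_ord0. Qed.

Lemma tX_neq0 n : 1 - tvar ^+ n.+1 != 0.
Proof.
have E : 1 - tvar ^+ n.+1 = tofrac ((1 : {poly int}) - 'X^(n.+1)).
  by rewrite tofracB tofrac1 tofracXn.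
rewrite E tofrac_eq0 subr_eq0 eq_sym.
apply/negP => /eqP H. have := congr1 (fun p : {poly int} => size p) H.
by rewrite /= size_polyXn size_poly1.
Qed.

Lemma pp_neq0 n : pp n != 0.
Proof.
elim: n => [|n IH]; first by rewrite pp0; exact: oner_neq0.
rewrite ppS; exact: (mulf_neq0 IH (tX_neq0 n)).
Qed.

Lemma tbinom_pp b c : tbinom (b + c) b = pp (b + c) / (pp b * pp c).
Proof. by rewrite /tbinom leq_addr addKn. Qed.

Lemma tbinom_gt a b : (a < b)%N -> tbinom a b = 0.
Proof. by rewrite /tbinom => /ltn_geF ->. Qed.

Lemma tbinom_n0 n : tbinom n 0 = 1.
Proof.
have := tbinom_pp 0 n; rewrite add0n => ->.
by rewrite pp0 mul1r (divff (pp_neq0 n)).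
Qed.

Lemma tbinom_nn n : tbinom n n = 1.
Proof.
have := tbinom_pp n 0; rewrite addn0 => ->.
by rewrite pp0 mulr1 (divff (pp_neq0 n)).
Qed.

Lemma fid1 (F : fieldType) (P B C X Y : F) : 1 - Y != 0 -> 1 - X != 0 -> P != 0 -> C != 0 -> B != 0 ->
 P*(1 - X*Y)/(B*(1-X)*(C*(1-Y))) = P/(B*(C*(1-Y))) + X*(P/(B*(1-X)*C)).
Proof. move=> h1 h2 h3 h4 h5. field. by rewrite h1 h2 h4 h5. Qed.

Lemma fid2 (F : fieldType) (P B C X Y : F) : 1 - Y != 0 -> 1 - X != 0 -> P != 0 -> C != 0 -> B != 0 ->
 P*(1 - X*Y)/(B*(1-X)*(C*(1-Y))) = P/(B*(1-X)*C) + Y*(P/(B*(C*(1-Y)))).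
Proof. move=> h1 h2 h3 h4 h5. field. by rewrite h1 h2 h4 h5. Qed.

Lemma fid3 (F : fieldType) (P B C X Y : F) : 1 - Y != 0 -> 1 - X != 0 -> P != 0 -> C != 0 -> B != 0 ->
 P/(B*(1-X)*C)*(1-X) = P/(B*(C*(1-Y)))*(1-Y).
Proof. move=> h1 h2 h3 h4 h5. field. by rewrite h1 h2 h4 h5. Qed.

Lemma pascal1 n b : tbinom n.+1 b.+1 = tbinom n b + tvar ^+ b.+1 * tbinom n b.+1.
Proof.
case: (ltngtP b n) => H.
- have [c ->] : exists c, n = (b + c.+1)%N by exists (n - b.+1)%N; lia.
  have -> : ((b + c.+1).+1 = b.+1 + c.+1)%N by lia.
  rewrite tbinom_pp.
  have -> : (b + c.+1 = b.+1 + c)%N by lia.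
  rewrite tbinom_pp.
  have -> : (b.+1 + c = b + c.+1)%N by lia.
  rewrite tbinom_pp.
  have -> : (b.+1 + c.+1 = (b + c.+1).+1)%N by lia.
  rewrite (ppS (b + c.+1)) (ppS b) (ppS c).
  have -> : ((b + c.+1).+1 = b.+1 + c.+1)%N by lia.
  rewrite exprD.
  have := pp_neq0 b; have := pp_neq0 c; have := pp_neq0 (b + c.+1).
  have := tX_neq0 b; have := tX_neq0 c.
  exact: fid1.
- by rewrite !tbinom_gt ?mulr0 ?addr0 // ltnS ltnW.
- by rewrite H !tbinom_nn tbinom_gt // mulr0 addr0.
Qed.

Lemma pascal2 n b : tbinom n.+1 b.+1 = tbinom n b.+1 + tvar ^+ (n - b) * tbinom n b.
Proof.
case: (ltngtP b n) => H.
- have [c ->] : exists c, n = (b + c.+1)%N by exists (n - b.+1)%N; lia.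
  have -> : ((b + c.+1).+1 = b.+1 + c.+1)%N by lia.
  rewrite tbinom_pp.
  have -> : (b + c.+1 = b.+1 + c)%N by lia.
  rewrite tbinom_pp.
  have -> : (b.+1 + c = b + c.+1)%N by lia.
  rewrite tbinom_pp.
  have -> : (b.+1 + c.+1 = (b + c.+1).+1)%N by lia.
  have -> : (b + c.+1 - b = c.+1)%N by lia.
  rewrite (ppS (b + c.+1)) (ppS b) (ppS c).
  have -> : ((b + c.+1).+1 = b.+1 + c.+1)%N by lia.
  rewrite exprD.
  have := pp_neq0 b; have := pp_neq0 c; have := pp_neq0 (b + c.+1).
  have := tX_neq0 b; have := tX_neq0 c.
  exact: fid2.
- by rewrite !tbinom_gt ?mulr0 ?addr0 // ltnS ltnW.
- by rewrite H !tbinom_nn subnn expr0 mul1r tbinom_gt // add0r.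
Qed.

Lemma ratio k b : tbinom k b.+1 * (1 - tvar ^+ b.+1) = tbinom k b * (1 - tvar ^+ (k - b)).
Proof.
case: (ltngtP b k) => H.
- have [c ->] : exists c, k = (b + c.+1)%N by exists (k - b.+1)%N; lia.
  rewrite tbinom_pp.
  have -> : (b + c.+1 = b.+1 + c)%N by lia.
  rewrite tbinom_pp.
  have -> : (b.+1 + c - b = c.+1)%N by lia.
  have -> : (b.+1 + c = b + c.+1)%N by lia.
  rewrite (ppS b) (ppS c).
  have := pp_neq0 b; have := pp_neq0 c; have := pp_neq0 (b + c.+1).
  have := tX_neq0 b; have := tX_neq0 c.
  exact: fid3.
- by rewrite !tbinom_gt ?mul0r // ltnW.
- by rewrite H subnn expr0 subrr mulr0 tbinom_gt ?mul0r.
Qed.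

Definition Q (i : nat) (x : ratfun) (m : nat) :=
  \sum_(0 <= j < m.+1) x ^+ j * tbinom (i + j - 1) j.

Lemma QS i x m : Q i x m.+1 = Q i x m + x ^+ m.+1 * tbinom (i + m.+1 - 1) m.+1.
Proof. by rewrite /Q big_nat_recr. Qed.

Lemma Q0 i x : Q i x 0 = 1.
Proof. by rewrite /Q big_nat1 expr0 mul1r tbinom_n0. Qed.


Lemma gQrec (R : comRingType) (Qt y a T c x : R) :
  Qt - y*a + (1-x)*(y*(a + T*c)) = Qt + T*y*c - x*y*(a+T*c).
Proof. ring. Qed.

Lemma Qrec i x m : (1 - x) * Q i.+1 x m = Q i (tvar * x) m - x ^+ m.+1 * tbinom (i + m) m.
Proof.
elim: m => [|m IH].
  by rewrite !Q0 addn0 tbinom_n0 mulr1 expr1 mulr1.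
rewrite !QS mulrDr IH.
have -> : (i.+1 + m.+1 - 1 = (i+m).+1)%N by lia.
have -> : (i + m.+1 - 1 = i + m)%N by lia.
have -> : (i + m.+1 = (i+m).+1)%N by lia.
rewrite pascal1 exprMn (exprS x m.+1).
exact: gQrec.
Qed.

Lemma hockey k m : Q k tvar m = tbinom (k + m) m.
Proof.
have := Qrec k 1 m.
rewrite subrr mul0r mulr1 expr1n mul1r => /esym /eqP.
by rewrite subr_eq0 => /eqP.
Qed.

Definition xx k i := tvar ^+ (k - i + 1).

Lemma gKR (R : comRingType) (A B T y Qa Qb Y c: R): A*(1-T) = B*(1-y) ->
  (1-y)*Qa = Qb - Y*c -> (1-T)*(A*Qa) = B*Qb - B*(Y*c).
Proof.
move=> h1 h2. transitivity (A*(1-T)*Qa); first ring.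
rewrite h1 -mulrA h2; ring.
Qed.

Lemma KR k i m :
  (1 - tvar ^+ i.+1) * (tbinom k i.+1 * Q i.+1 (xx k i.+1) m) =
  tbinom k i * Q i (xx k i) m - tbinom k i * ((tvar ^+ (k - i)) ^+ m.+1 * tbinom (i + m) m).
Proof.
case: (ltngtP i k) => H.
- have -> : xx k i.+1 = tvar ^+ (k - i) by rewrite /xx; congr (_ ^+ _); lia.
  have -> : xx k i = tvar * tvar ^+ (k - i) by rewrite /xx -exprS; congr (_ ^+ _); lia.
  apply: gKR; [exact: ratio | exact: Qrec].
- have h1 : (k < i.+1)%N by lia.
  by rewrite (@tbinom_gt k i H) (@tbinom_gt k i.+1 h1) !mul0r mulr0 subrr.
- rewrite H tbinom_gt // tbinom_nn mul0r mulr0 !mul1r subnn expr0 expr1n mul1r.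
  rewrite /xx subnn add0n expr1 hockey.
  by rewrite subrr.
Qed.

Lemma gA (R : comRingType) (a b c d e : R) : a*b*c*(d*e) = a*d*(b*c*e).
Proof. ring. Qed.
Lemma gB (R : comRingType) (B X T P S : R) : 1*B*(T*P) + (X + T*S) = X + T*(1*B*P + S).
Proof. ring. Qed.

Lemma V1 m n r :
  \sum_(0 <= i < r.+1) tbinom m i * tbinom n (r - i) * tvar ^+ ((m - i) * (r - i)) =
  tbinom (m + n) r.
Proof.
elim: m r => [|m IH] r.
  rewrite big_nat_recl // tbinom_nn subn0 mul0n expr0 mul1r mulr1 add0n.
  rewrite big1_seq ?addr0 // => i _.
  by rewrite tbinom_gt // !mul0r.
case: r => [|r].
  by rewrite big_nat1 !tbinom_n0 muln0 expr0 !mulr1.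
rewrite big_nat_recl //.
under eq_bigr => i _ do rewrite subSS subSS pascal1 mulrDl mulrDl.
rewrite big_split /= IH.
have E := IH r.+1.
rewrite big_nat_recl // in E.
rewrite addSn pascal1 -E.
have S : \sum_(0 <= i < r.+1)
      tvar ^+ i.+1 * tbinom m i.+1 * tbinom n (r - i) *
      tvar ^+ ((m - i) * (r - i)) = tvar ^+ r.+1 * \sum_(0 <= i < r.+1)
       (tbinom m i.+1 * tbinom n (r.+1 - i.+1) *
       tvar ^+ ((m - i.+1) * (r.+1 - i.+1))).
  rewrite mulr_sumr; apply: eq_big_nat => i /andP [_ Hi].
  rewrite subSS.
  case: (ltnP i m) => Him; last first.
    by rewrite (@tbinom_gt m i.+1) ?ltnS // ?mulr0 ?mul0r ?mulr0 ?mul0r.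
  have -> : (m - i = (m - i.+1).+1)%N by lia.
  rewrite mulSn exprD gA -exprD.
  congr (_ ^+ _ * _); lia.
rewrite S !subn0 !tbinom_n0 mulSn exprD.
exact: gB.
Qed.

Lemma gC (R : comRingType) (a b c : R) : a*b*c = b*c*a.
Proof. ring. Qed.

Lemma VM k l : \sum_(0 <= i < l.+1) tvar ^+ (i * i.+1) * tbinom l (l - i) * tbinom k.+1 i.+1
  = tbinom (k.+1 + l) l.+1.
Proof.
have := V1 l k.+1 l.+1.
rewrite big_nat_recr //= (@tbinom_gt l l.+1) // !mul0r addr0 addnC => <-.
rewrite [RHS]big_nat_rev.
apply: eq_big_nat => i /andP[_ Hi].
rewrite add0n.
have -> : (l.+1 - i.+1 = l - i)%N by lia.
have -> : (l.+1 - (l - i) = i.+1)%N by lia.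
have -> : (l - (l - i) = i)%N by lia.
exact: gC.
Qed.

Definition W k l i := tbinom k i * Q i (xx k i) (l - i).
Definition F k l s := 1 + \sum_(1 <= i < l.+1) tvar ^+ (i * s) * W k l i.

Lemma Fsh k l s : F k l s = 1 + \sum_(0 <= i < l) tvar ^+ (i.+1 * s) * W k l i.+1.
Proof. by rewrite /F big_add1. Qed.

Lemma W0 k l : W k l 0 = 1.
Proof.
rewrite /W tbinom_n0 mul1r /Q big_nat_recl // expr0 mul1r tbinom_n0.
rewrite big1_seq ?addr0 // => j _.
by rewrite tbinom_gt ?mulr0 //; lia.
Qed.

Lemma TS k l s : tvar ^+ s * F k l s = \sum_(0 <= i < l.+1) tvar ^+ (i.+1 * s) * W k l i.
Proof.
rewrite Fsh big_nat_recl // W0 mul1n mulr1 mulrDr mulr1 mulr_sumr; congr (_ + _).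
apply: eq_bigr => i _.
by rewrite mulrA -exprD mulSn.
Qed.

Definition Vs k l s := \sum_(0 <= i < l.+1) tvar ^+ (i.+1 * s) *
   (tbinom k i * ((tvar ^+ (k - i)) ^+ (l - i).+1 * tbinom (i + (l - i)) (l - i))).

Lemma gS (R : comRingType) (P T W D V : R) : (1 - T) * W = D - V ->
  P * W = P * T * W + (P * D - P * V).
Proof. move=> h; rewrite -mulrBr -h; ring. Qed.

Lemma gS2 (R : comRingType) (a b d v : R) : a = b + (d - v) ->
  1 + a = 1 + b + d - v.
Proof. move=> ->; ring. Qed.

Lemma Star k l s : F k l.+1 s = F k l.+1 s.+1 + tvar ^+ s * F k l s - Vs k l s.
Proof.
rewrite TS !Fsh /Vs; apply: gS2.
rewrite -sumrB -big_split /=.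
apply: eq_bigr => i _.
rewrite mulnSr exprD.
apply: gS.
rewrite /W subSS.
exact: KR.
Qed.

Definition Us k l s := \sum_(0 <= i < l.+1) tvar ^+ (i.+1 * s) *
   (tbinom k i.+1 * ((tvar ^+ (k - i)) ^+ (l - i) * tbinom l (l - i))).

Lemma gD (R : comRingType) (A C U a u : R) : A = C + U -> a = u ->
  1 + (A + a) = 1 + C + (U + u).
Proof. move=> -> ->; ring. Qed.

Lemma DS k l s : F k l.+1 s = F k l s + Us k l s.
Proof.
rewrite !Fsh /Us big_nat_recr //= [in RHS]big_nat_recr //=.
apply: gD.
  rewrite -big_split /=.
  apply: eq_big_nat => i /andP [_ Hi].
  rewrite /W subSS.
  have -> : (l - i = (l - i.+1).+1)%N by lia.
  rewrite QS.
  have -> : (i.+1 + (l - i.+1).+1 - 1 = l)%N by lia.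
  have -> : ((l - i.+1).+1 = l - i)%N by lia.
  case: (ltnP i k) => Hik; last first.
    by rewrite (@tbinom_gt k i.+1) ?ltnS // !mul0r !mulr0 addr0.
  have -> : xx k i.+1 = tvar ^+ (k - i) by rewrite /xx; congr (_ ^+ _); lia.
  by rewrite !mulrDr.
rewrite /W !subnn Q0 expr0 tbinom_n0 mul1r.
by [].
Qed.

Lemma gU (R : comRingType) (P Yn Y c B1 B0 Tl Ti : R) : P * Yn = Tl * Ti ->
  P * (B1 * (Yn * c)) + P * (B0 * (Yn * Y * c)) = Tl * (Ti * c * (B1 + Y * B0)).
Proof.
move=> h; transitivity (P * Yn * (c * (B1 + Y * B0))); first ring.
rewrite h; ring.
Qed.

Lemma UV k l : Us k l (k + l.+1) + Vs k l (k + l.+1) =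
  tvar ^+ (l.+1 * (k + 1)) * tbinom (k + l.+1) l.+1.
Proof.
have -> : tbinom (k + l.+1) l.+1 = tbinom (k.+1 + l) l.+1 by rewrite addSn addnS.
rewrite /Us /Vs -big_split /= -VM mulr_sumr.
apply: eq_big_nat => i /andP[_ Hi].
have -> : (i + (l - i) = l)%N by lia.
case: (leqP i k) => Hik; last first.
  rewrite (@tbinom_gt k i) // (@tbinom_gt k i.+1) ?(@tbinom_gt k.+1 i.+1) //; last lia.
  by rewrite ?mul0r ?mulr0 ?mul0r ?mulr0 ?addr0.
rewrite pascal2 exprSr.
apply: gU.
rewrite -exprM -!exprD; congr (_ ^+ _).
nia.
Qed.

Lemma gM (R : comRingType) (Fl U V X T : R) : Fl + U = X + T * Fl - V ->
  (1 - T) * Fl + (U + V) = X.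
Proof. move=> h; transitivity (Fl + U - T * Fl + V); [ring | rewrite h; ring]. Qed.

Lemma mainF k l : Akl k l = F k l (k + l + 1).
Proof.
elim: l => [|l IH].
  by rewrite /F big_geq // addr0.
have -> : Akl k l.+1 = (1 - tvar ^+ (k + l.+1)) * Akl k l +
   tvar ^+ (l.+1 * (k + 1)) * tbinom (k + l.+1) l.+1 by [].
rewrite IH.
have -> : (k + l + 1 = k + l.+1)%N by lia.
rewrite -UV addn1.
have S := Star k l (k + l.+1).
rewrite DS in S.
exact: gM.
Qed.

Theorem lemma2 (k l : nat) :
  Akl k l =
  1 + \sum_(1 <= i < l.+1)
        tvar ^+ (i * (k + l + 1)) * tbinom k i *
        \sum_(0 <= j < (l - i).+1)
          tvar ^+ (j * (k - i + 1)) * tbinom (i + j - 1) j.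
Proof.
rewrite mainF /F /W /Q; congr (_ + _); apply: eq_bigr => i _.
rewrite mulrA; congr (_ * _); apply: eq_bigr => j _.
by rewrite /xx -exprM mulnC.
Qed.
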